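(* Every $\mathrm{PL}_{\{\neg,\top\}}$-formula $\phi$ is uniquely characterized with respect to $\mathrm{PL}_{\{\neg,\top\}}$ by a set of 2 labeled examples.
   Context: $\top$ is treated as a constant unary Boolean function and $\neg$ is negation. Fix a countably infinite set of propositional variables. $\mathrm{PL}_{\{\neg,\top\}}$ is the set of formulas generated by $\phi::=x\mid\neg\phi\mid\top(\phi)$, with the obvious semantics under truth assignments $V$ (assigning $0$ or $1$ to every variable); two formulas are equivalent if they agree under all assignments. A labeled example is a pair $(V,\mathrm{lab})$ with $V$ a truth assignment and $\mathrm{lab}\in\{0,1\}$; $\phi$ fits it if $\phi$ evaluates to $\mathrm{lab}$ under $V$. A set $E$ of labeled examples uniquely characterizes $\phi$ with respect to a set of formulas $L$ if $\phi$ fits all of $E$ and every formula in $L$ that fits all of $E$ is equivalent to $\phi$. *)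

(* Defs.v *)
From Stdlib Require Import List Bool.
Import ListNotations.

Inductive form : Type :=
| Var : nat -> form
| Neg : form -> form
| Top : form -> form.

Definition assignment := nat -> bool.

Fixpoint eval (V : assignment) (phi : form) : bool :=
  match phi with
  | Var x => V x
  | Neg psi => negb (eval V psi)
  | Top _ => true
  end.

Definition equiv (phi psi : form) : Prop := forall V, eval V phi = eval V psi.

(* A labeled example: an assignment and a label in {0,1} (false = 0, true = 1). *)
Definition example := (assignment * bool)%type.

Definition fits (phi : form) (e : example) : Prop := eval (fst e) phi = snd e.

Definition fits_all (phi : form) (E : list example) : Prop :=
  forall e, In e E -> fits phi e.

Definition uniquely_characterizes (E : list example) (phi : form) : Prop :=
  fits_all phi E /\ forall psi, fits_all psi E -> equiv psi phi.

(* Main.v *)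
Require Import Defs.
From Stdlib Require Import List Bool Arith.
Import ListNotations.

Inductive nf := P (n : nat) | N (n : nat) | CT | CF.

Definition negnf (a : nf) : nf :=
  match a with P n => N n | N n => P n | CT => CF | CF => CT end.

Fixpoint tonf (phi : form) : nf :=
  match phi with Var x => P x | Neg p => negnf (tonf p) | Top _ => CT end.

Definition evnf (V : assignment) (a : nf) : bool :=
  match a with P n => V n | N n => negb (V n) | CT => true | CF => false end.

Lemma eval_nf V phi : eval V phi = evnf V (tonf phi).
Proof.
  induction phi; simpl; auto.
  rewrite IHphi. destruct (tonf phi); simpl; auto using negb_involutive.
Qed.

Definition V1 (a : nf) : assignment :=
  match a with P x => fun k => Nat.eqb k x | N x => fun k => negb (Nat.eqb k x)
  | CT => fun _ => false | CF => fun _ => false end.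
Definition V2 (a : nf) : assignment :=
  match a with P x => fun _ => false | N x => fun _ => true
  | CT => fun _ => true | CF => fun _ => true end.
Definition l1 (a : nf) : bool := match a with P _ => true | N _ => true | CT => true | CF => false end.
Definition l2 (a : nf) : bool := match a with P _ => false | N _ => false | CT => true | CF => false end.

Lemma key n m : evnf (V1 n) m = l1 n -> evnf (V2 n) m = l2 n -> m = n.
Proof.
  destruct n as [x|x| |]; destruct m as [y|y| |]; simpl; intros H1 H2;
    try discriminate; auto.
  - apply Nat.eqb_eq in H1. now subst.
  - destruct (Nat.eqb y x) eqn:E; try discriminate. apply Nat.eqb_eq in E; now subst.
Qed.

Theorem theoremA2 :
  forall phi : form,
    exists E : list example,
      length E = 2 /\ NoDup E /\ uniquely_characterizes E phi.
Proof.
  intro phi.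
  exists [(V1 (tonf phi), l1 (tonf phi)); (V2 (tonf phi), l2 (tonf phi))].
  split; [reflexivity|]. split.
  - constructor; [|constructor; [intros []|constructor]].
    intros [H|[]]. injection H as HV Hl.
    destruct (tonf phi) as [x|x| |]; simpl in *; try discriminate.
    + pose proof (f_equal (fun f => f 0) HV). simpl in H. discriminate.
    + pose proof (f_equal (fun f => f 0) HV). simpl in H. discriminate.
  - split.
    + intros e [<-|[<-|[]]]; unfold fits; simpl; rewrite eval_nf;
        destruct (tonf phi) as [x|x| |]; simpl; auto;
        rewrite Nat.eqb_refl; reflexivity.
    + intros psi Hf V.
      assert (H1 := Hf _ (or_introl eq_refl)).
      assert (H2 := Hf _ (or_intror (or_introl eq_refl))).
      unfold fits in *; simpl in *. rewrite eval_nf in H1, H2.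
      rewrite !eval_nf. now rewrite (key _ _ H1 H2).
Qed.
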